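(* Let $\epsilon\in(0,1/2)$, $\eta=(A,D)\in(\epsilon,1-\epsilon)^{2p}$, $\xi,\omega,\zeta\in(\epsilon,1-\epsilon)$, and let $\pi$ be an everywhere positive probability mass function on $\Gamma=\{0,1\}^p$. If $\zeta=\xi\omega$, then $$p^{\mathrm{ARN}}_{(\xi\eta,\omega)}(\gamma,\gamma')=p^{\mathrm{ASI}}_{\zeta\eta}(\gamma,\gamma')\quad\text{for all }\gamma,\gamma'\in\Gamma.$$
   Context: $\Gamma=\{0,1\}^p$, $d_H$ is Hamming distance, $c\eta=(cA,cD)$ for scalar $c$. Neighbourhood indicator distribution: $p^{\mathrm{RN}}_{\xi\eta}(k\mid\gamma)=\prod_j p_j(k_j\mid\gamma_j)$, $k\in\{0,1\}^p$, with $p_j(1\mid0)=\xi A_j$, $p_j(0\mid0)=1-\xi A_j$, $p_j(1\mid1)=\xi D_j$, $p_j(0\mid1)=1-\xi D_j$. $N(\gamma,k)=\{\gamma^*:\gamma^*_j=\gamma_j\ \forall j\text{ with }k_j=0\}$, $p_k=\sum_jk_j$, $q^{\mathrm{THIN}}_{\omega,k}(\gamma,\gamma')=\omega^{d_H(\gamma,\gamma')}(1-\omega)^{p_k-d_H(\gamma,\gamma')}\mathbb{I}\{\gamma'\in N(\gamma,k)\}$. ARN acceptance $\alpha^{\mathrm{ARN}}_{(\xi\eta,\omega),k}(\gamma,\gamma')=\min\{1,\frac{\pi(\gamma')p^{\mathrm{RN}}_{\xi\eta}(k\mid\gamma')q^{\mathrm{THIN}}_{\omega,k}(\gamma',\gamma)}{\pi(\gamma)p^{\mathrm{RN}}_{\xi\eta}(k\mid\gamma)q^{\mathrm{THIN}}_{\omega,k}(\gamma,\gamma')}\}$.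 ARN transition kernel: for $\gamma'\neq\gamma$, $p^{\mathrm{ARN}}_{(\xi\eta,\omega)}(\gamma,\gamma')=\sum_{k\in\{0,1\}^p}p^{\mathrm{RN}}_{\xi\eta}(k\mid\gamma)q^{\mathrm{THIN}}_{\omega,k}(\gamma,\gamma')\alpha^{\mathrm{ARN}}_{(\xi\eta,\omega),k}(\gamma,\gamma')$, and $p^{\mathrm{ARN}}(\gamma,\gamma)=1-\sum_{\gamma'\ne\gamma}p^{\mathrm{ARN}}(\gamma,\gamma')$. ASI proposal $q^{\mathrm{ASI}}_{\zeta\eta}(\gamma,\gamma')=\prod_jq_j(\gamma_j,\gamma'_j)$ with $q_j(0,1)=\zeta A_j$, $q_j(0,0)=1-\zeta A_j$, $q_j(1,0)=\zeta D_j$, $q_j(1,1)=1-\zeta D_j$; acceptance $\alpha^{\mathrm{ASI}}_{\zeta\eta}=\min\{1,\frac{\pi(\gamma')q^{\mathrm{ASI}}_{\zeta\eta}(\gamma',\gamma)}{\pi(\gamma)q^{\mathrm{ASI}}_{\zeta\eta}(\gamma,\gamma')}\}$; ASI kernel $p^{\mathrm{ASI}}_{\zeta\eta}(\gamma,\gamma')=q^{\mathrm{ASI}}_{\zeta\eta}(\gamma,\gamma')\alpha^{\mathrm{ASI}}_{\zeta\eta}(\gamma,\gamma')$ for $\gamma'\ne\gamma$ and $p^{\mathrm{ASI}}(\gamma,\gamma)=1-\sum_{\gamma'\ne\gamma}p^{\mathrm{ASI}}(\gamma,\gamma')$. *)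

(* Defs.v *)
From mathcomp Require Import all_boot all_order all_algebra.
Set Implicit Arguments. Unset Strict Implicit. Unset Printing Implicit Defensive.
Import Order.TTheory GRing.Theory Num.Theory.
Local Open Scope ring_scope.

Notation Gamma p := {ffun 'I_p -> bool}.

Section Defs.
Variables (R : realFieldType) (p : nat).

Definition dH (g g' : Gamma p) : nat := #|[set j | g j != g' j]|.

Definition pk (k : Gamma p) : nat := #|[set j | k j]|.

Definition scale (c : R) (A : 'I_p -> R) : 'I_p -> R := fun j => c * A j.

Definition pRNj (A D : 'I_p -> R) (j : 'I_p) (kj gj : bool) : R :=
  if gj then (if kj then D j else 1 - D j)
  else (if kj then A j else 1 - A j).

(* p^RN_eta(k | gamma), applied with A := xi A, D := xi D *)
Definition pRN (A D : 'I_p -> R) (k g : Gamma p) : R :=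
  \prod_(j < p) pRNj A D j (k j) (g j).

Definition inN (g : Gamma p) (k : Gamma p) (g' : Gamma p) : bool :=
  [forall j, ~~ k j ==> (g' j == g j)].

Definition qTHIN (omega : R) (k g g' : Gamma p) : R :=
  if inN g k g' then omega ^+ dH g g' * (1 - omega) ^+ (pk k - dH g g')
  else 0.

Definition alphaARN (pi : Gamma p -> R) (A D : 'I_p -> R) (omega : R)
  (k g g' : Gamma p) : R :=
  Num.min 1 ((pi g' * pRN A D k g' * qTHIN omega k g' g) /
             (pi g * pRN A D k g * qTHIN omega k g g')).

Definition pARN_off (pi : Gamma p -> R) (A D : 'I_p -> R) (omega : R)
  (g g' : Gamma p) : R :=
  \sum_(k : Gamma p) pRN A D k g * qTHIN omega k g g' * alphaARN pi A D omega k g g'.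

Definition pARN (pi : Gamma p -> R) (A D : 'I_p -> R) (omega : R)
  (g g' : Gamma p) : R :=
  if g' != g then pARN_off pi A D omega g g'
  else 1 - \sum_(g'' : Gamma p | g'' != g) pARN_off pi A D omega g g''.

(* ASI proposal, applied with A := zeta A, D := zeta D *)
Definition qASIj (A D : 'I_p -> R) (j : 'I_p) (gj gj' : bool) : R :=
  if gj then (if gj' then 1 - D j else D j)
  else (if gj' then A j else 1 - A j).

Definition qASI (A D : 'I_p -> R) (g g' : Gamma p) : R :=
  \prod_(j < p) qASIj A D j (g j) (g' j).

Definition alphaASI (pi : Gamma p -> R) (A D : 'I_p -> R) (g g' : Gamma p) : R :=
  Num.min 1 ((pi g' * qASI A D g' g) / (pi g * qASI A D g g')).

Definition pASI_off (pi : Gamma p -> R) (A D : 'I_p -> R) (g g' : Gamma p) : R :=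
  qASI A D g g' * alphaASI pi A D g g'.

Definition pASI (pi : Gamma p -> R) (A D : 'I_p -> R) (g g' : Gamma p) : R :=
  if g' != g then pASI_off pi A D g g'
  else 1 - \sum_(g'' : Gamma p | g'' != g) pASI_off pi A D g g''.

End Defs.

(* Main.v *)
Require Import Defs.
From mathcomp Require Import all_boot all_order all_algebra.
From mathcomp Require Import ring lra.
Import Order.TTheory GRing.Theory Num.Theory.
Local Open Scope ring_scope.

Section S.
Variables (R : realFieldType) (p : nat).
Implicit Types (g k h : Gamma p) (omega : R).

Definition tj (omega : R) (kj gj gj' : bool) : R :=
  if kj then (if gj != gj' then omega else 1 - omega)
  else (if gj == gj' then 1 else 0).

Lemma inN_sym g k h : inN g k h = inN h k g.
Proof.
by apply/forallP/forallP => H j; move: (H j); rewrite eq_sym.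
Qed.

Lemma dH_sym g h : dH g h = dH h g.
Proof. by rewrite /dH; apply: eq_card => j; rewrite !inE eq_sym. Qed.

Lemma qTHIN_sym omega k g h : qTHIN omega k g h = qTHIN omega k h g.
Proof. by rewrite /qTHIN inN_sym dH_sym. Qed.

Lemma qTHIN_prod omega k g h :
  qTHIN omega k g h = \prod_(j < p) tj omega (k j) (g j) (h j).
Proof.
rewrite /qTHIN; case: ifP => HN.
  have HN' := forallP HN.
  rewrite (bigID (fun j => k j)) /= [X in _ = _ * X]big1 ?mulr1; last first.
    move=> j /negbTE kj; move: (HN' j); rewrite /tj kj /= eq_sym => /eqP ->.
    by rewrite eqxx.
  rewrite (bigID (fun j => g j != h j)) /=.
  rewrite (eq_bigr (fun _ => omega)); last by move=> j /andP [kj gh]; rewrite /tj kj gh.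
  rewrite [X in _ = _ * X](eq_bigr (fun _ => 1 - omega)); last first.
    by move=> j /andP [kj /negbTE gh]; rewrite /tj kj gh.
  have E1 : \prod_(j | k j && (g j != h j)) omega = omega ^+ dH g h.
    rewrite /dH -prodr_const; apply: eq_bigl => j; rewrite inE.
    case: (boolP (k j)) => //= kj.
    by move: (HN' j); rewrite kj /= eq_sym => /eqP ->; rewrite eqxx.
  have cnt : (pk k - dH g h)%N = #|[set j | k j && (g j == h j)]|.
    rewrite /pk /dH -(cardID [set j | g j != h j] [set j | k j]).
    have -> : #|[predI [set j | k j] & [set j | g j != h j]]| = #|[set j | g j != h j]|.
      apply: eq_card => j; rewrite !inE; case: (boolP (k j)) => //= kj.
      by move: (HN' j); rewrite kj /= eq_sym => /eqP ->; rewrite eqxx.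
    rewrite addKn; apply: eq_card => j; rewrite !inE negbK.
    by rewrite andbC.
  have E2 : \prod_(j | k j && ~~ (g j != h j)) (1 - omega) = (1 - omega) ^+ (pk k - dH g h).
    rewrite cnt -prodr_const; apply: eq_bigl => j; by rewrite inE negbK.
  by rewrite E1 E2.
move/negbT: HN; rewrite negb_forall => /existsP [j]; rewrite negb_imply => /andP [kj hj].
rewrite (bigD1 j) //= /tj (negbTE kj) eq_sym (negbTE hj) mul0r //.
Qed.

Lemma pRN_gt0 (A D : 'I_p -> R) k g :
  (forall j, 0 < A j < 1) -> (forall j, 0 < D j < 1) -> 0 < pRN A D k g.
Proof.
move=> HA HD; rewrite /pRN; apply: prodr_gt0 => j _.
have /andP [a0 a1] := HA j; have /andP [d0 d1] := HD j.
rewrite /pRNj; case: (g j); case: (k j); lra.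
Qed.

Lemma qASI_gt0 (A D : 'I_p -> R) g h :
  (forall j, 0 < A j < 1) -> (forall j, 0 < D j < 1) -> 0 < qASI A D g h.
Proof.
move=> HA HD; rewrite /qASI; apply: prodr_gt0 => j _.
have /andP [a0 a1] := HA j; have /andP [d0 d1] := HD j.
rewrite /qASIj; case: (g j); case: (h j); lra.
Qed.

Lemma cross (A D : 'I_p -> R) c1 c2 k g h : inN g k h ->
  pRN (scale c1 A) (scale c1 D) k h * qASI (scale c2 A) (scale c2 D) g h =
  pRN (scale c1 A) (scale c1 D) k g * qASI (scale c2 A) (scale c2 D) h g.
Proof.
move=> /forallP HN; rewrite /pRN /qASI -!big_split; apply: eq_bigr => j _ /=.
move: (HN j); rewrite /pRNj /qASIj /scale.
by case: (k j); case: (g j); case: (h j) => //= _; ring.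
Qed.

Lemma sum_prop (A D : 'I_p -> R) xi omega g h :
  \sum_(k : Gamma p) pRN (scale xi A) (scale xi D) k g * qTHIN omega k g h =
  qASI (scale (xi * omega) A) (scale (xi * omega) D) g h.
Proof.
under eq_bigr => k _ do rewrite qTHIN_prod /pRN -big_split.
rewrite -(bigA_distr_bigA (fun j b => pRNj (scale xi A) (scale xi D) j b (g j) * tj omega b (g j) (h j))).
rewrite /qASI; apply: eq_bigr => j _; rewrite big_bool /=.
rewrite /pRNj /tj /qASIj /scale; case: (g j); case: (h j) => /=; ring.
Qed.


Lemma off_eq (pi : Gamma p -> R) (A D : 'I_p -> R) xi omega g h :
  (forall j, 0 < xi * A j < 1) -> (forall j, 0 < xi * D j < 1) ->
  (forall j, 0 < xi * omega * A j < 1) -> (forall j, 0 < xi * omega * D j < 1) ->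
  (forall g, 0 < pi g) ->
  pARN_off pi (scale xi A) (scale xi D) omega g h =
  pASI_off pi (scale (xi * omega) A) (scale (xi * omega) D) g h.
Proof.
move=> HA HD HA' HD' Hpi.
rewrite /pARN_off /pASI_off.
transitivity (\sum_(k : Gamma p) pRN (scale xi A) (scale xi D) k g * qTHIN omega k g h *
   alphaASI pi (scale (xi * omega) A) (scale (xi * omega) D) g h); last first.
  by rewrite -mulr_suml sum_prop.
apply: eq_bigr => k _.
case: (boolP (qTHIN omega k g h == 0)) => [/eqP->|nz]; first by rewrite !mulr0 !mul0r.
congr (_ * _); rewrite /alphaARN /alphaASI; congr (Num.min 1 _).
have HN : inN g k h by move: nz; rewrite /qTHIN; case: ifP => //; rewrite eqxx.
rewrite (qTHIN_sym omega k h g).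
have cr := @cross A D xi (xi * omega) k g h HN.
set q := qTHIN omega k g h in nz *.
set P' := pRN _ _ k h in cr *. set P := pRN _ _ k g in cr *.
set Q := qASI _ _ g h in cr *. set Q' := qASI _ _ h g in cr *.
have P0 : P != 0 by apply: lt0r_neq0; apply: pRN_gt0.
have Q0 : Q != 0 by apply: lt0r_neq0; apply: qASI_gt0.
have pi0 : pi g != 0 by apply: lt0r_neq0.
have -> : P' = P * Q' / Q by rewrite -cr; field.
by field; rewrite ?P0 ?Q0 ?pi0 ?nz.
Qed.

End S.

Lemma prod01 {R : realFieldType} {a b : R} : 0 < a < 1 -> 0 < b < 1 -> 0 < a * b < 1.
Proof. move=> /andP [a0 a1] /andP [b0 b1]; apply/andP; split; nra. Qed.

Theorem theorem1 (R : realFieldType) (p : nat) (eps : R)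
  (A D : 'I_p -> R) (xi omega zeta : R) (pi : Gamma p -> R) :
  0 < eps -> eps < 1 / 2 ->
  (forall j, eps < A j < 1 - eps) ->
  (forall j, eps < D j < 1 - eps) ->
  eps < xi < 1 - eps -> eps < omega < 1 - eps -> eps < zeta < 1 - eps ->
  (forall g, 0 < pi g) -> \sum_(g : Gamma p) pi g = 1 ->
  zeta = xi * omega ->
  forall g g' : Gamma p,
    pARN pi (scale xi A) (scale xi D) omega g g' =
    pASI pi (scale zeta A) (scale zeta D) g g'.
Proof.
move=> e0 e2 HA HD /andP [x0 x1] /andP [o0 o1] _ Hpi _ -> g g'.
have Hx : 0 < xi < 1 by apply/andP; split; lra.
have Ho : 0 < omega < 1 by apply/andP; split; lra.
have HA1 j : 0 < A j < 1 by have /andP [? ?] := HA j; apply/andP; split; lra.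
have HD1 j : 0 < D j < 1 by have /andP [? ?] := HD j; apply/andP; split; lra.
have HxA j := prod01 Hx (HA1 j). have HxD j := prod01 Hx (HD1 j).
have HxoA j := prod01 (prod01 Hx Ho) (HA1 j).
have HxoD j := prod01 (prod01 Hx Ho) (HD1 j).
have E h := @off_eq R p pi A D xi omega g h HxA HxD HxoA HxoD Hpi.
rewrite /pARN /pASI; case: ifP => _; first exact: E.
by congr (_ - _); apply: eq_bigr => h _; apply: E.
Qed.
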